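(* Let $G$ be a finite group and $H$ a subgroup such that $\mathcal{O}_G(H)$ is Boolean with coatoms $M_1,\ldots,M_\ell$. If $\mathcal{O}_G(H)$ is group-complemented, then $\hat\varphi(H,G)=\prod_{i=1}^{\ell}(|G:M_i|-1)$.
   Context: $\mathcal{O}_G(H)=\{K\mid H\le K\le G\}$; Boolean means isomorphic to the lattice of subsets of a finite set; coatoms are the maximal elements of $\mathcal{O}_G(H)\setminus\{G\}$. For $K\in\mathcal{O}_G(H)$, $K^{\complement}$ is its lattice complement ($K\cap K^{\complement}=H$, $\langle K,K^{\complement}\rangle=G$); $\mathcal{O}_G(H)$ is group-complemented if $KK^{\complement}=K^{\complement}K$ for all $K\in\mathcal{O}_G(H)$. The dual Euler totient is $\hat\varphi(H,G)=\sum_{K\in\mathcal{O}_G(H)}\mu(H,K)|G:K|$ with $\mu$ the Möbius function of $\mathcal{O}_G(H)$. *)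

(* Defs.v *)
From mathcomp Require Import all_boot all_algebra all_fingroup.
Set Implicit Arguments. Unset Strict Implicit. Unset Printing Implicit Defensive.
Import GRing.Theory.
Local Open Scope group_scope.

Section Overgroups.
Variable gT : finGroupType.
Implicit Types H G K L M : {group gT}.

Definition in_interval H G K : bool := (H \subset K) && (K \subset G).

(* The fuel argument n is
   always large enough (#|Z| strictly decreases). *)
Fixpoint mobius_rec H (n : nat) K : int :=
  match n with
  | 0 => 0%R
  | n'.+1 =>
      if K == H then 1%R
      else if H \subset K then
        (- \sum_(Z : {group gT} | (H \subset Z) && (Z \proper K)) mobius_rec H n' Z)%R
      else 0%R
  end.

Definition mobius H K : int := mobius_rec H #|K|.+1 K.

Definition dual_totient H G : int :=
  (\sum_(K : {group gT} | in_interval H G K) mobius H K * (#|G : K|)%:Z)%R.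

Definition interval_boolean H G : Prop :=
  exists (n : nat) (f : {group gT} -> {set 'I_n}),
    [/\ {in in_interval H G &, injective f},
        (forall S : {set 'I_n}, exists2 K, in_interval H G K & f K = S)
      & {in in_interval H G &, forall K L, (K \subset L) = (f K \subset f L)}].

Definition coatom H G M : bool :=
  [&& in_interval H G M, M != G &
      [forall K : {group gT}, (in_interval H G K && (M \subset K) && (K != G)) ==> (K == M)]].

Definition lat_complement H G K Kc : bool :=
  [&& in_interval H G Kc, K :&: Kc == H & K <*> Kc == G].

Definition group_complemented H G : Prop :=
  forall K Kc : {group gT}, in_interval H G K -> lat_complement H G K Kc ->
    (K * Kc)%g = (Kc * K)%g.

End Overgroups.

(* Main.v *)
Require Import Defs.
From mathcomp Require Import all_boot all_algebra all_fingroup.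
From mathcomp Require Import zify.
Set Implicit Arguments. Unset Strict Implicit. Unset Printing Implicit Defensive.
Import GRing.Theory.
Local Open Scope group_scope.

Section Pf.
Variables (gT : finGroupType) (G H : {group gT}) (n : nat)
  (f : {group gT} -> {set 'I_n}).
Hypothesis HG : H \subset G.
Hypothesis finj : {in in_interval H G &, injective f}.
Hypothesis fsurj : forall S : {set 'I_n}, exists2 K, in_interval H G K & f K = S.
Hypothesis fmono : {in in_interval H G &, forall K L : {group gT}, (K \subset L) = (f K \subset f L)}.
Hypothesis Hc : group_complemented H G.

Definition g S : {group gT} := odflt H [pick K | in_interval H G K && (f K == S)].

Lemma gP S : in_interval H G (g S) /\ f (g S) = S.
Proof.
rewrite /g; case: pickP => [K /andP[iK /eqP]|] //=.
by case: (fsurj S) => K iK fK /(_ K); rewrite iK fK eqxx.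
Qed.
Lemma gI S : in_interval H G (g S). Proof. by case: (gP S). Qed.
Lemma gIn S : g S \in in_interval H G. Proof. exact: gI. Qed.
Lemma fg S : f (g S) = S. Proof. by case: (gP S). Qed.
Lemma gf K : in_interval H G K -> g (f K) = K.
Proof. by move=> iK; apply: finj; [exact: gI | exact: iK | rewrite fg]. Qed.
Lemma gsub S T : (g S \subset g T) = (S \subset T).
Proof. by rewrite fmono ?gIn // !fg. Qed.
Lemma Hsub S : H \subset g S. Proof. by case/andP: (gI S). Qed.
Lemma subG S : g S \subset G. Proof. by case/andP: (gI S). Qed.
Lemma iH : in_interval H G H. Proof. by rewrite /in_interval subxx HG. Qed.
Lemma iG : in_interval H G G. Proof. by rewrite /in_interval subxx HG. Qed.

Lemma iHn : H \in in_interval H G. Proof. exact: iH. Qed.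
Lemma iGn : G \in in_interval H G. Proof. exact: iG. Qed.
Lemma g0 : g set0 = H.
Proof.
have : f H \subset f (g set0) by rewrite -fmono ?gIn ?iHn ?Hsub.
by rewrite fg subset0 => /eqP <-; apply: gf; apply: iH.
Qed.

Lemma gT_ : g setT = G.
Proof.
have : f (g setT) \subset f G by rewrite -fmono ?gIn ?iGn ?subG.
by rewrite fg subTset => /eqP <-; apply: gf; apply: iG.
Qed.

Lemma gmeet S T : g S :&: g T = g (S :&: T).
Proof.
pose K := (g S :&: g T)%G.
have iK : in_interval H G K.
  by rewrite /in_interval subsetI !Hsub /= (subset_trans (subsetIl _ _) (subG S)).
suff <- : K = g (S :&: T) by [].
rewrite -(gf iK); congr g; apply/eqP; rewrite eqEsubset subsetI -andbA; apply/and3P; split.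
- by rewrite -(fg S) -fmono ?gIn // subsetIl.
- by rewrite -(fg T) -fmono ?gIn // subsetIr.
- by rewrite -(fg (S :&: T)) -fmono ?gIn // subsetI !gsub subsetIl subsetIr.
Qed.

Lemma gjoin S T : g S <*> g T = g (S :|: T).
Proof.
pose K := (g S <*> g T)%G.
have iK : in_interval H G K.
  by rewrite /in_interval join_subG !subG (subset_trans (Hsub S)) ?joing_subl.
suff <- : K = g (S :|: T) by [].
rewrite -(gf iK); congr g; apply/eqP; rewrite eqEsubset subUset; apply/andP; split.
- by rewrite -(fg (S :|: T)) -fmono ?gIn // join_subG !gsub subsetUl subsetUr.
- apply/andP; split.
  + by rewrite -(fg S) -fmono ?gIn // joing_subl.
  + by rewrite -(fg T) -fmono ?gIn // joing_subr.
Qed.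

Lemma compl_mul S : (g S * g (~: S))%g = G.
Proof.
have := @Hc (g S) (g (~: S)) (gI S).
rewrite /lat_complement gI gmeet setICr g0 eqxx gjoin setUCr gT_ eqxx => /(_ isT) E.
by rewrite -comm_joingE // gjoin setUCr gT_.
Qed.

Lemma index_compl S : #|G : g S| = #|g (~: S) : H|.
Proof.
have := mul_cardG (g S) (g (~: S)).
rewrite compl_mul gmeet setICr g0 -{1}(Lagrange (subG S)) -(Lagrange (Hsub (~: S))).
move: (cardG_gt0 (g S)) (cardG_gt0 H) => s0 h0.
by rewrite mulnCA [X in _ = X]mulnC => /eqP; rewrite !eqn_pmul2l // => /eqP.
Qed.


Lemma atom_prod (T : {set 'I_n}) : #|g T : H| = (\prod_(i in T) #|g [set i] : H|)%N.
Proof.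
move Ek: #|T| => k; elim: k T Ek => [|k IH] T cT.
  move: cT => /eqP; rewrite cards_eq0 => /eqP ->.
  by rewrite big_set0 g0 indexgg.
have [i iT] : exists i, i \in T by apply/set0Pn; rewrite -card_gt0 cT.
rewrite (big_setD1 i iT) /= -IH; last by rewrite (cardsD1 i T) iT in cT; case: cT.
have XY : (g [set i] * g (T :\ i))%g = g T.
  rewrite setDE setIC -gmeet group_modl ?gsub ?sub1set // compl_mul.
  exact: (setIidPr (subG T)).
have XIY : g [set i] :&: g (T :\ i) = H.
  rewrite gmeet -g0; congr g; apply/setP => j; rewrite !inE.
  by case: (j == i).
have := mul_cardG (g [set i]) (g (T :\ i)); rewrite XY XIY.
rewrite -(Lagrange (Hsub [set i])) -(Lagrange (Hsub (T :\ i))) -(Lagrange (Hsub T)).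
move: (cardG_gt0 H) => h0 E.
apply/eqP; rewrite -(@eqn_pmul2l (#|H| * #|H|)) ?muln_gt0 ?h0 //; apply/eqP.
nia.
Qed.

Lemma sum_sub (T : {set 'I_n}) : T != set0 ->
  (\sum_(S : {set 'I_n} | S \subset T) (-1) ^+ #|S| = 0 :> int)%R.
Proof.
case/set0Pn => j jT.
have := @bigA_distr int 0%R 1%R *%R +%R _
  (fun i : 'I_n => if i \in T then (-1)%R else 0%R) (fun _ => 1%R).
rewrite (bigD1 j) //= jT addNr mul0r => /esym E.
rewrite -[RHS]E big_mkcond; apply: eq_big => // S _.
case: (boolP (S \subset T)) => ST.
  rewrite (bigID (fun i => i \in S)) /= [X in (_ * X)%R]big1 ?mulr1.
    rewrite -prodr_const; apply: eq_bigr => i iS; rewrite iS.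
    by rewrite (subsetP ST).
  by move=> i /negbTE ->.
case/subsetPn: ST => k kS kT.
by rewrite (bigD1 k) //= kS (negbTE kT) mul0r.
Qed.


Lemma gproper S (K : {group gT}) : in_interval H G K -> (g S \proper K) = (S \proper f K).
Proof. by move=> iK; rewrite -{1}(gf iK) !properE !gsub. Qed.

Lemma fH : f H = set0. Proof. by rewrite -g0 fg. Qed.

Lemma mob m (K : {group gT}) : #|K| < m -> in_interval H G K ->
  mobius_rec H m K = ((-1) ^+ #|f K|)%R.
Proof.
elim: m K => [|m IH] K // lt iK /=.
case/andP: (iK) => HK KG.
case: eqP => [->|/eqP KH]; first by rewrite fH cards0.
rewrite HK (eq_bigr (fun Z => (-1) ^+ #|f Z|)%R); last first.
  move=> Z /andP[HZ ZK]; apply: IH.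
    exact: leq_trans (proper_card ZK) lt.
  by rewrite /in_interval HZ (subset_trans (proper_sub ZK) KG).
rewrite (reindex_onto g f) /=; last first.
  move=> Z /andP[HZ ZK]; apply: gf.
  by rewrite /in_interval HZ (subset_trans (proper_sub ZK) KG).
rewrite (eq_bigl (fun S : {set 'I_n} => S \proper f K)) => [|S]; last first.
  by rewrite Hsub gproper // fg eqxx andbT.
rewrite (eq_bigr (fun S : {set 'I_n} => (-1) ^+ #|S|)%R) => [|S _]; last by rewrite fg.
have nz : f K != set0.
  by apply: contraNneq KH => fK0; rewrite -(gf iK) fK0 g0.
have := sum_sub nz; rewrite (bigD1 (f K)) //=.
rewrite (eq_bigl (fun S : {set 'I_n} => S \proper f K)) => [|S]; last by rewrite properEneq andbC.
move/eqP; rewrite addr_eq0 => /eqP E. by rewrite E.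
Qed.

Lemma mobE (K : {group gT}) : in_interval H G K -> mobius H K = ((-1) ^+ #|f K|)%R.
Proof. by move=> iK; apply: mob. Qed.

Lemma g_inj : injective g. Proof. exact: can_inj fg. Qed.

Lemma gneqG S : (g S != G) = (S != setT).
Proof. by rewrite -gT_ (inj_eq g_inj). Qed.

Lemma coatomE S : coatom H G (g S) = (#|~: S| == 1%N).
Proof.
rewrite /coatom gI /= gneqG.
apply/idP/idP.
  case/andP => nS /forallP Hm.
  have [i iS] : exists i, i \in ~: S.
    by apply/set0Pn; apply: contra nS => /eqP h; rewrite -(setCK S) h setC0.
  have := Hm (g [set~ i]); rewrite gI gsub subsetC sub1set iS /=.
  rewrite gneqG (inj_eq g_inj).
  have -> : [set~ i] != setT.
    by apply/eqP => /setP /(_ i); rewrite !inE eqxx.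
  by move/eqP => <-; rewrite setCK cards1.
case/cards1P => i Si.
have -> : S = [set~ i] by rewrite -Si setCK.
have -> /= : [set~ i] != setT.
  by apply/eqP => /setP /(_ i); rewrite !inE eqxx.
apply/forallP => K; apply/implyP => /andP[/andP[iK sK]].
rewrite -(gf iK) gneqG (inj_eq g_inj) => nT.
move: sK; rewrite -(gf iK) gsub => sK.
have iK' : i \notin f K.
  apply: contra nT => iK'; apply/eqP/setP => j; rewrite inE.
  case: (eqVneq j i) => [->//|ji].
  by apply: (subsetP sK); rewrite !inE ji.
rewrite fg eqEsubset sK andbT; apply/subsetP => j jK; rewrite !inE.
by apply: contraNneq iK' => <-.
Qed.


Lemma PoszP (A : {set 'I_n}) (F : 'I_n -> nat) :
  Posz (\prod_(i in A) F i)%N = (\prod_(i in A) (F i)%:Z)%R.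
Proof. exact: (big_morph Posz PoszM (erefl _)). Qed.

Lemma main_eq : dual_totient H G =
    (\prod_(M : {group gT} | coatom H G M) ((#|G : M|%g)%:Z - 1))%R.
Proof.
rewrite /dual_totient (reindex_onto g f) /=; last by move=> K iK; apply: gf.
rewrite (eq_bigl (fun S : {set 'I_n} => true)) => [|S]; last by rewrite gI fg eqxx.
rewrite (eq_bigr (fun S : {set 'I_n} => (-1) ^+ #|S| *
     (\prod_(i in ~: S) (#|g [set i] : H|)%:Z))%R) => [|S _]; last first.
  by rewrite mobE ?gI // fg index_compl atom_prod PoszP.
rewrite [RHS](reindex_onto g f) /=; last by move=> M /and3P[iM _ _]; apply: gf.
rewrite [RHS](eq_bigl (fun S : {set 'I_n} => #|~: S| == 1%N)) => [|S]; last first.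
  by rewrite coatomE fg eqxx andbT.
rewrite [RHS](reindex_inj (@setC_inj 'I_n)) /=.
rewrite [RHS](eq_bigl (fun S : {set 'I_n} => #|S| == 1%N)) => [|S]; last by rewrite setCK.
rewrite [RHS]big_cards1.
transitivity (\prod_i (-1 + (#|g [set i] : H|)%:Z))%R; last first.
  by apply: eq_bigr => i _; rewrite index_compl setCK addrC.
rewrite (@bigA_distr int 0%R 1%R *%R +%R).
apply: eq_bigr => S _.
rewrite [RHS](bigID (fun i => i \in S)) /=.
congr (_ * _)%R.
  by rewrite -prodr_const; apply: eq_bigr => i ->.
by apply: eq_big => [i|i]; rewrite ?inE // => /negbTE ->.
Qed.

End Pf.

Theorem lemma10p13 (gT : finGroupType) (G H : {group gT}) :
  H \subset G ->
  interval_boolean H G ->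
  group_complemented H G ->
  dual_totient H G =
    (\prod_(M : {group gT} | coatom H G M) ((#|G : M|%g)%:Z - 1))%R.
Proof.
move=> HG [n [f [finj fsurj fmono]]] Hc.
exact: (main_eq HG finj fsurj fmono Hc).
Qed.
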